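(* Let $g$ be an $n$-variable Boolean function, $b\in\mathbb{F}_2$, and $g_b$ the $(n+1)$-variable function $g_b(X_{n+1},X_n,\ldots,X_1)=(1\oplus X_{n+1})g(X_n,\ldots,X_1)\oplus X_{n+1}(b\oplus g(1\oplus X_n,\ldots,1\oplus X_1))$. If $g$ is $t$-resilient but not $(t+1)$-resilient for some integer $0\le t<n$ with $t\equiv b\pmod 2$, then $g_b$ is $(t+1)$-resilient but not $(t+2)$-resilient. If moreover $g$ is plateaued, then $g_b$ is plateaued and every nonzero value $W_{g_b}^2(\bm{\beta})$ equals $\max_{\bm{\alpha}}W_g^2(\bm{\alpha})=2^{-H_\infty(g)}$.
   Context: Walsh transform: $W_f(\bm{\alpha})=2^{-n}\sum_{\mathbf{x}}(-1)^{f(\mathbf{x})\oplus\langle\mathbf{x},\bm{\alpha}\rangle}$. $f$ is $t$-resilient if $W_f(\bm{\alpha})=0$ whenever the Hamming weight $\mathrm{wt}(\bm{\alpha})\le t$; $f$ is plateaued if $W_f$ takes only values in $\{0,c,-c\}$ for some $c$. $H_\infty(f)=\min_{\bm{\alpha}:W_f^2(\bm{\alpha})\ne0}\log_2(1/W_f^2(\bm{\alpha}))$. *)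

(* Defs.v *)
From mathcomp Require Import all_boot all_order all_algebra.
From mathcomp Require Import reals exp.
Set Implicit Arguments. Unset Strict Implicit. Unset Printing Implicit Defensive.
Import Order.TTheory GRing.Theory Num.Theory.
Local Open Scope ring_scope.

(* Points of F_2^n: x : bvec n, with x i the coordinate X_{i+1}. *)
Definition bvec (n : nat) := {ffun 'I_n -> bool}.

Definition boolfun (n : nat) := bvec n -> bool.

Definition dotb n (x a : bvec n) : bool := \big[addb/false]_(i < n) (x i && a i).

Definition wt n (a : bvec n) : nat := #|[set i | a i]|.

Definition walsh (R : realType) n (f : boolfun n) (a : bvec n) : R :=
  (2 ^+ n)^-1 * \sum_(x : bvec n) (-1) ^+ (f x (+) dotb x a).

Definition resilient (R : realType) n (f : boolfun n) (t : nat) : Prop :=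
  forall a : bvec n, (wt a <= t)%N -> walsh R f a = 0.

Definition plateaued (R : realType) n (f : boolfun n) : Prop :=
  exists c : R, forall a : bvec n, walsh R f a \in [:: 0; c; - c].

Definition log2 (R : realType) (x : R) : R := ln x / ln 2.

Definition H_infty (R : realType) n (f : boolfun n) : R :=
  let S := [seq log2 (1 / walsh R f a ^+ 2) | a <- enum [set: bvec n]
             & walsh R f a ^+ 2 != 0] in
  \big[Num.min/head 0 S]_(h <- S) h.

(* max_a W_f(a)^2 (all terms are nonnegative) *)
Definition maxW2 (R : realType) n (f : boolfun n) : R :=
  \big[Num.max/0]_(a : bvec n) walsh R f a ^+ 2.

Definition lowv n (x : bvec n.+1) : bvec n :=
  [ffun i : 'I_n => x (widen_ord (leqnSn n) i)].
Definition topv n (x : bvec n.+1) : bool := x ord_max.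
Definition complv n (x : bvec n) : bvec n := [ffun i => ~~ x i].

Definition gext n (g : boolfun n) (b : bool) : boolfun n.+1 :=
  fun x => ((~~ topv x) && g (lowv x)) (+) (topv x && (b (+) g (complv (lowv x)))).

(* Main.v *)
Require Import Defs.
From mathcomp Require Import all_boot all_order all_algebra.
From mathcomp Require Import reals exp.
From mathcomp Require Import ring zify.
Import Order.TTheory GRing.Theory Num.Theory.
Set Implicit Arguments. Unset Strict Implicit. Unset Printing Implicit Defensive.
Local Open Scope ring_scope.

Definition extf n (y : bvec n) (c : bool) (i : 'I_n.+1) : bool :=
  match (insub (val i) : option 'I_n) with Some j => y j | None => c end.
Definition extv n (y : bvec n) (c : bool) : bvec n.+1 := finfun (extf y c).

Lemma lowv_ext n (y : bvec n) c : lowv (extv y c) = y.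
Proof.
apply/ffunP => i; rewrite !ffunE /extf.
case: insubP => [j _ hj|]; last by rewrite /= ltn_ord.
by congr (y _); apply: val_inj.
Qed.

Lemma topv_ext n (y : bvec n) c : topv (extv y c) = c.
Proof. by rewrite /topv ffunE /extf insubF //= ltnn. Qed.

Lemma ext_low_top n (x : bvec n.+1) : extv (lowv x) (topv x) = x.
Proof.
apply/ffunP => i; rewrite ffunE /extf.
case: insubP => [j _ hj|hn].
  by rewrite ffunE; congr (x _); apply: val_inj.
rewrite /topv; congr (x _); apply: val_inj => /=.
by move: hn (ltn_ord i) => /= hn; rewrite ltnS leq_eqVlt (negbTE hn) orbF => /eqP.
Qed.


Lemma extv_widen n (y : bvec n) c i : extv y c (widen_ord (leqnSn n) i) = y i.
Proof. by have := congr1 (fun f : bvec n => f i) (lowv_ext y c); rewrite ffunE. Qed.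
Lemma extv_max n (y : bvec n) c : extv y c ord_max = c.
Proof. exact: topv_ext. Qed.

Lemma sum_split (V : nmodType) n (F : bvec n.+1 -> V) :
  \sum_(x : bvec n.+1) F x = \sum_(c : bool) \sum_(y : bvec n) F (extv y c).
Proof.
rewrite pair_big /= (reindex (fun p : bool * bvec n => extv p.2 p.1)) //=.
exists (fun x => (topv x, lowv x)) => [[c y] _|x _] /=.
  by rewrite lowv_ext topv_ext.
by rewrite ext_low_top.
Qed.

Lemma xorb_sum n (F : 'I_n -> bool) :
  \big[addb/false]_i F i = odd (\sum_i (F i : nat))%N.
Proof.
rewrite (big_morph odd oddD (erefl (odd 0))); apply: eq_bigr => i _.
by rewrite oddb.
Qed.

Lemma wt_sum n (a : bvec n) : wt a = (\sum_i (a i : nat))%N.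
Proof.
rewrite /wt (eq_bigr (fun i => if a i then 1%N else 0%N)); last first.
  by move=> i _; case: (a i).
rewrite -big_mkcond /= sum1_card.
by apply: eq_card => i; rewrite inE.
Qed.

Lemma dotb_ext n (y : bvec n) c (be : bvec n.+1) :
  dotb (extv y c) be = dotb y (lowv be) (+) (c && topv be).
Proof.
rewrite /dotb big_ord_recr /=; congr (_ (+) _).
  by apply: eq_bigr => i _; rewrite extv_widen ffunE.
by rewrite extv_max.
Qed.

Lemma wt_ext n (y : bvec n) c : wt (extv y c) = (wt y + c)%N.
Proof.
rewrite !wt_sum big_ord_recr /=; congr (_ + _)%N.
  by apply: eq_bigr => i _; rewrite extv_widen.
by rewrite extv_max.
Qed.

Lemma wt_low_top n (be : bvec n.+1) : wt be = (wt (lowv be) + topv be)%N.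
Proof. by rewrite -{1}(ext_low_top be) wt_ext. Qed.

Lemma complvK n : involutive (@Defs.complv n).
Proof. by move=> z; apply/ffunP => i; rewrite !ffunE negbK. Qed.

Lemma dotb_compl n (z a : bvec n) : dotb (Defs.complv z) a = dotb z a (+) odd (wt a).
Proof.
rewrite /dotb (eq_bigr (fun i => (z i && a i) (+) a i)); last first.
  by move=> i _; rewrite ffunE; case: (z i); case: (a i).
by rewrite big_split /= wt_sum -xorb_sum.
Qed.

Lemma xor_shuffle (b x y z u : bool) :
  b (+) x (+) (y (+) z (+) u) = b (+) z (+) u (+) (x (+) y).
Proof. by case: b; case: x; case: y; case: z; case: u. Qed.

Lemma walsh_gext (R : realType) n (g : boolfun n) b (be : bvec n.+1) :
  walsh R (gext g b) be = walsh R g (lowv be) *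
     ((1 + (-1) ^+ (b (+) odd (wt (lowv be)) (+) topv be)) / 2).
Proof.
rewrite /walsh sum_split big_bool /=.
set W := \sum_(x : bvec n) (-1) ^+ (g x (+) dotb x (lowv be)).
have E0 : \sum_(y : bvec n) (-1) ^+ (gext g b (extv y false) (+) dotb (extv y false) be) = W :> R.
  apply: eq_bigr => y _; rewrite /gext topv_ext lowv_ext dotb_ext /=.
  by rewrite !addbF.
have E1 : \sum_(y : bvec n) (-1) ^+ (gext g b (extv y true) (+) dotb (extv y true) be) = (-1) ^+ (b (+) odd (wt (lowv be)) (+) topv be) * W :> R.
  rewrite (reindex_inj (can_inj (@complvK n))) /= mulr_sumr.
  apply: eq_bigr => z _; rewrite /gext topv_ext lowv_ext dotb_ext /= complvK dotb_compl.
  rewrite -signr_addb; congr (_ ^+ _).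
  by rewrite xor_shuffle.
rewrite E0 E1 exprS invfM.
have h2 : (2 : R) != 0 by rewrite pnatr_eq0.
have h2n : (2 : R) ^+ n != 0 by rewrite expf_neq0.
field.
exact: h2n.
Qed.

Lemma walsh_gext_if (R : realType) n (g : boolfun n) b (be : bvec n.+1) :
  walsh R (gext g b) be = if b (+) odd (wt (lowv be)) (+) topv be then 0
                          else walsh R g (lowv be).
Proof.
rewrite walsh_gext; case: (_ (+) _) => /=.
  by rewrite expr1 subrr mul0r mulr0.
have h2 : (2 : R) != 0 by rewrite pnatr_eq0.
by rewrite expr0 divff // mulr1.
Qed.

Lemma bigmin_const (R : realType) (S : seq R) L :
  (forall h, h \in S -> h = L) -> S != [::] ->
  \big[Num.min/head 0 S]_(h <- S) h = L.
Proof.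
case: S => [//|h S'] HS _; rewrite big_seq.
apply: (big_ind (fun v => v = L)).
- exact: HS (mem_head _ _).
- by move=> x y -> ->; rewrite minxx.
- by move=> i; exact: HS.
Qed.

Theorem mainTheorem7 (R : realType) (n : nat) (g : boolfun n) (b : bool) (t : nat) :
  (t < n)%N -> odd t = b ->
  resilient R g t -> ~ resilient R g t.+1 ->
  (resilient R (gext g b) t.+1 /\ ~ resilient R (gext g b) t.+2) /\
  (plateaued R g ->
     plateaued R (gext g b) /\
     (forall beta : bvec n.+1, walsh R (gext g b) beta ^+ 2 != 0 ->
        walsh R (gext g b) beta ^+ 2 = maxW2 R g) /\
     maxW2 R g = 2 `^ (- H_infty R g)).
Proof.
move=> tn hb rg nrg.
have hw : forall a, walsh R g a != 0 -> (t < wt a)%N.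
  move=> a ha; case: (leqP (wt a) t) => // h.
  by rewrite rg ?eqxx in ha.
have [a0 ha0] : exists a0, walsh R g a0 != 0.
  case: (boolP [exists a, walsh R g a != 0]) => [/existsP [a ha]|/existsPn H].
    by exists a.
  exfalso; apply: nrg => a _; apply/eqP; move: (H a); by rewrite negbK.
split; [split|].
- move=> be hbe; rewrite walsh_gext_if.
  case he: (_ (+) _) => //.
  case: (eqVneq (walsh R g (lowv be)) 0) => // hne; exfalso.
  have h1 := hw _ hne.
  rewrite wt_low_top in hbe.
  move: he hbe; case: (topv be) => /=.
    move=> _ hbe; lia.
  move=> he hbe.
  have E : wt (lowv be) = t.+1 by lia.
  move: he; rewrite E /= -hb; by case: (odd t).
- move=> hres; apply: nrg => a ha.
  case: (eqVneq (walsh R g a) 0) => // hne; exfalso.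
  have h1 := hw _ hne.
  have wa : wt a = t.+1 by lia.
  have := hres (extv a true); rewrite wt_ext wa walsh_gext_if lowv_ext topv_ext wa.
  rewrite /= -hb addn1 leqnn => /(_ isT).
  by case: (odd t) => /=; apply/eqP.
move=> [c hc].
have sq : forall a, walsh R g a != 0 -> walsh R g a ^+ 2 = c ^+ 2.
  move=> a; move: (hc a); rewrite !inE => /or3P [/eqP->|/eqP->|/eqP->];
    by rewrite ?eqxx // sqrrN.
have mx : maxW2 R g = c ^+ 2.
  apply/le_anti/andP; split.
    apply: bigmax_le; first exact: sqr_ge0.
    move=> a _; case: (eqVneq (walsh R g a) 0) => [->|h].
      by rewrite expr2 mulr0 sqr_ge0.
    by rewrite sq.
  rewrite -(sq a0 ha0); exact: le_bigmax.
have c0 : c != 0.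
  apply: contra_neq ha0 => c0; move: (hc a0); rewrite c0 oppr0 !inE.
  by rewrite !orbb => /eqP.
split; [|split].
- exists c => be; rewrite walsh_gext_if.
  case: (_ (+) _); last exact: hc.
  by rewrite !inE eqxx.
- move=> be; rewrite walsh_gext_if mx.
  case: (_ (+) _); first by rewrite expr2 mulr0 eqxx.
  rewrite sqrf_eq0; exact: sq.
have HL : H_infty R g = log2 (1 / c ^+ 2).
  rewrite /H_infty /=; apply: bigmin_const.
    move=> h /mapP [a]; rewrite mem_filter => /andP [ha _] ->.
    by rewrite sq // -sqrf_eq0.
  apply: (contraTneq _ (map_f (fun a => log2 (1 / walsh R g a ^+ 2))
     (_ : a0 \in [seq a <- enum [set: bvec n] | walsh R g a ^+ 2 != 0]))).
    by move=> ->.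
  by rewrite mem_filter sqrf_eq0 ha0 mem_enum in_setT.
have cpos : 0 < c ^+ 2 by rewrite lt_def sqr_ge0 andbT sqrf_eq0.
have l2 : ln (2 : R) != 0 by rewrite gt_eqF // ln_gt0 // ltr1n.
rewrite mx HL /powR pnatr_eq0 /= /log2 mulNr divfK // div1r lnV ?posrE //.
by rewrite opprK lnK ?posrE.
Qed.
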